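(* Let $(\mathcal{A},E,\mathcal{B})$ be an operator-valued $C^*$-probability space and $x_1,x_2,y_1,y_2,w$ self-adjoint elements of $\mathcal{A}$ such that $\mathcal{A}_{\{x_1,x_2\}}\prec\mathcal{A}_w\prec\mathcal{A}_{\{y_1,y_2\}}$ over $\mathcal{B}$. Then for all $n,m\ge0$, $$E\big[(x_1+y_1)^nw(x_2+y_2)^m\big]=\sum_{k=0}^n\sum_{\ell=0}^m\sum_{\substack{q_0,\dots,q_k\ge0\\ q_0+\dots+q_k=n-k}}\sum_{\substack{p_0,\dots,p_\ell\ge0\\ p_0+\dots+p_\ell=m-\ell}}E\Big[E[y_1^{q_0}]x_1E[y_1^{q_1}]\cdots x_1E[y_1^{q_k}]\cdot E[w]\cdot E[y_2^{p_0}]x_2E[y_2^{p_1}]\cdots x_2E[y_2^{p_\ell}]\Big].$$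
   Context: $(\mathcal{A},E,\mathcal{B})$: unital $C^*$-algebra, unital $C^*$-subalgebra $\mathcal{B}$, completely positive conditional expectation $E:\mathcal{A}\to\mathcal{B}$; $y^0$ is interpreted as $1$ (so $E[y^0]=1$). For a set $S\subseteq\mathcal{A}$, $\mathcal{A}_S$ is the (possibly non-unital) $\mathcal{B}$-bimodule subalgebra generated by $S$. Monotone independence $\mathcal{A}_1\prec\mathcal{A}_2\prec\mathcal{A}_3$ over $\mathcal{B}$ means $E[a_1\cdots a_j\cdots a_n]=E[a_1\cdots a_{j-1}E[a_j]a_{j+1}\cdots a_n]$ whenever $a_k\in\mathcal{A}_{i_k}$, $i_k\in\{1,2,3\}$, and $i_{j-1}<i_j>i_{j+1}$ (one inequality dropped at the ends). *)

(* Defs.v *)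
From mathcomp Require Import all_boot all_order all_algebra.
Set Implicit Arguments. Unset Strict Implicit. Unset Printing Implicit Defensive.
Import GRing.Theory.
Local Open Scope ring_scope.

(* Algebraic skeleton of an operator-valued probability space (A, E, B):
   A a (unital) ring, B a unital subring (given as a predicate), and
   E : A -> A an additive B-bimodule projection onto B
   (a conditional expectation). *)
Definition cond_expectation (A : nzRingType) (B : pred A) (E : A -> A) : Prop :=
  1 \in B /\
      (forall b c, b \in B -> c \in B -> b + c \in B) /\
      (forall b, b \in B -> - b \in B) /\
      (forall b c, b \in B -> c \in B -> b * c \in B) /\
      (forall a c, E (a + c) = E a + E c) /\
      (forall a, E a \in B) /\
      (forall b, b \in B -> E b = b) /\
      (forall b a c, b \in B -> c \in B -> E (b * a * c) = b * E a * c).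

(* A_S : the (possibly non-unital) B-bimodule subalgebra generated by S. *)
Inductive gen_alg (A : nzRingType) (B : pred A) (S : pred A) : A -> Prop :=
  | gen_base s : s \in S -> gen_alg B S s
  | gen_add a c : gen_alg B S a -> gen_alg B S c -> gen_alg B S (a + c)
  | gen_mul a c : gen_alg B S a -> gen_alg B S c -> gen_alg B S (a * c)
  | gen_lmul b a : b \in B -> gen_alg B S a -> gen_alg B S (b * a)
  | gen_rmul a b : b \in B -> gen_alg B S a -> gen_alg B S (a * b).

(* Monotone independence Alg 1 < Alg 2 < Alg 3 over B (w.r.t. E):
   for every word a_0 ... a_{n-1} with a_k in Alg (idx k), idx k in {1,2,3},
   and every position j that is a local peak (idx (j-1) < idx j > idx (j+1),
   the missing inequality dropped at the ends),
   E[a_0 ... a_{n-1}] = E[a_0 ... E[a_j] ... a_{n-1}]. *)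
Definition monotone3 (A : nzRingType) (E : A -> A) (Alg : nat -> A -> Prop) : Prop :=
  forall (n : nat) (a : nat -> A) (idx : nat -> nat) (j : nat),
    (forall k, (k < n)%N -> (1 <= idx k <= 3)%N /\ Alg (idx k) (a k)) ->
    (j < n)%N ->
    ((0 < j)%N -> (idx j.-1 < idx j)%N) ->
    ((j.+1 < n)%N -> (idx j.+1 < idx j)%N) ->
    E (\prod_(k < n) a k) = E (\prod_(k < n) (if k == j :> nat then E (a k) else a k)).

(* chain E x y [:: q_0; ...; q_k] = E[y^q_0] x E[y^q_1] x ... x E[y^q_k]
   (and 1 for the empty list, which is never used). *)
Definition chain (A : nzRingType) (E : A -> A) (x y : A) (q : seq nat) : A :=
  match q with
  | [::] => 1
  | q0 :: qs => E (y ^+ q0) * \prod_(qi <- qs) (x * E (y ^+ qi))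
  end.

(* Main.v *)
Require Import Defs.
From mathcomp Require Import all_boot all_order all_algebra.
From mathcomp Require Import zify.
Set Implicit Arguments. Unset Strict Implicit. Unset Printing Implicit Defensive.
Import GRing.Theory.
Local Open Scope ring_scope.

Fixpoint Cmp (k N : nat) : seq (seq nat) :=
  match k with
  | 0 => [:: [:: N]]
  | k'.+1 => [seq j :: t | j <- iota 0 N.+1, t <- Cmp k' (N - j)]
  end.

Lemma CmpS k N : Cmp k.+1 N = [seq j :: t | j <- iota 0 N.+1, t <- Cmp k (N - j)].
Proof. by []. Qed.

Lemma mem_Cmp k N s : (s \in Cmp k N) = (size s == k.+1) && (sumn s == N).
Proof.
elim: k N s => [|k IH] N s.
  rewrite /= inE; case: s => [|a [|b s]] /=.
  - by [].
  - by rewrite addn0 eqseq_cons andbT.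
  - by rewrite eqseq_cons /= andbF.
rewrite CmpS; apply/flatten_mapP/andP.
  move=> [j hj /mapP [t ht ->]]; move: ht; rewrite IH => /andP[/eqP h1 /eqP h2].
  rewrite mem_iota in hj; rewrite /= h1 h2; split => //; apply/eqP; lia.
case: s => [|j t] [] // /eqP hs /eqP hsum.
have {hs} hs : size t = k.+1 by case: hs.
have {hsum} hsum : (j + sumn t)%N = N by [].
exists j.
  rewrite mem_iota; apply/andP; split => //; lia.
apply/mapP; exists t => //.
rewrite IH hs eqxx /=; apply/eqP; lia.
Qed.

Lemma uniq_Cmp k N : uniq (Cmp k N).
Proof.
elim: k N => [|k IH] N //.
rewrite CmpS; apply: allpairs_uniq_dep; first exact: iota_uniq.
  by move=> j _; exact: IH.
move=> [a b] [c d] _ _ /= [e1]; subst c => e2.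
by rewrite e2.
Qed.

Lemma mem_sumn (s : seq nat) x : x \in s -> (x <= sumn s)%N.
Proof.
elim: s => [|a s IH] //=; rewrite inE => /orP[/eqP->|/IH h]; lia.
Qed.

Lemma tuple_Cmp (R : nmodType) k N (F : seq nat -> R) :
  \sum_(q : (k.+1).-tuple 'I_N.+1 | (\sum_(i <- q) val i)%N == N) F (map val q)
  = \sum_(s <- Cmp k N) F s.
Proof.
rewrite -big_filter -(big_map (fun q : (k.+1).-tuple 'I_N.+1 => map val q) xpredT F).
apply: perm_big; apply: uniq_perm.
- rewrite map_inj_uniq ?filter_uniq ?index_enum_uniq //.
  move=> q1 q2 h; apply: val_inj; exact: (inj_map val_inj h).
- exact: uniq_Cmp.
move=> s; rewrite mem_Cmp; apply/mapP/andP.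
  move=> [q]; rewrite mem_filter => /andP[hq _] ->.
  rewrite size_map size_tuple eqxx; split => //.
  by rewrite sumnE big_map.
move=> [/eqP hs /eqP hsum].
have hs' : size (map (fun i => (inord i : 'I_N.+1)) s) == k.+1 by rewrite size_map hs.
have hm : map val (map (fun i => (inord i : 'I_N.+1)) s) = s.
  rewrite -map_comp -[RHS]map_id; apply/eq_in_map => x hx /=.
  rewrite inordK //; rewrite ltnS -hsum; exact: mem_sumn.
exists (Tuple hs'); last by rewrite /= hm.
rewrite mem_filter mem_index_enum andbT /=.
by rewrite -(big_map val xpredT (fun i => i)) -sumnE hm hsum.
Qed.

Lemma sum_widen (R : nmodType) M n (G : nat -> R) : (M <= n)%N ->
  \sum_(j < M) G j = \sum_(j < n) (if (j < M)%N then G j else 0).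
Proof.
move=> h; rewrite -(big_mkord xpredT G) (big_nat_widen _ _ _ _ _ h) big_mkord.
by rewrite big_mkcond.
Qed.

Lemma tri_exchange (R : nmodType) n (F : nat -> nat -> R) :
  \sum_(k < n) \sum_(j < n - k) F k j = \sum_(j < n) \sum_(k < n - j) F k j.
Proof.
rewrite (eq_bigr (fun k : 'I_n => \sum_(j < n) (if (j < n - k)%N then F k j else 0))); last first.
  by move=> k _; rewrite (sum_widen _ (leq_subr _ _)).
rewrite exchange_big /=; apply: eq_bigr => j _.
rewrite (sum_widen (fun k => F k j) (leq_subr j n)); apply: eq_bigr => k _.
have -> : (j < n - k)%N = (k < n - j)%N.
  have := ltn_ord j; have := ltn_ord k; lia.
by [].
Qed.
Lemma ce_facts (A : nzRingType) (B : pred A) (E : A -> A) : cond_expectation B E ->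
  [/\ 0 \in B, E 0 = 0, E 1 = 1, forall a c, E (a + c) = E a + E c &
   forall (I : Type) (r : seq I) (P : pred I) (F : I -> A),
     E (\sum_(i <- r | P i) F i) = \sum_(i <- r | P i) E (F i)].
Proof.
move=> [h1 [hD [hN [hM [hEa [hEB [hEid hbim]]]]]]].
have B0 : 0 \in B by have := hD _ _ h1 (hN _ h1); rewrite subrr.
have E0 : E 0 = 0 by apply: hEid.
split => //; first exact: hEid.
move=> I r P F; exact: (big_morph E hEa E0).
Qed.

Fixpoint valid (A : nzRingType) (Alg : nat -> A -> Prop) (s : seq (nat * A)) : Prop :=
  match s with
  | [::] => True
  | p :: s' => ((1 <= p.1 <= 3)%N /\ Alg p.1 p.2) /\ valid Alg s'
  end.

Definition prodw (A : nzRingType) (s : seq (nat * A)) : A := \prod_(p <- s) p.2.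
Definition lastI (A : Type) (s : seq (nat * A)) := last 0%N (map fst s).
Definition headI (A : Type) (s : seq (nat * A)) := head 0%N (map fst s).

Lemma valid_cat (A : nzRingType) (Alg : nat -> A -> Prop) s1 s2 :
  valid Alg s1 -> valid Alg s2 -> valid Alg (s1 ++ s2).
Proof. by elim: s1 => [|p s IH] //= [h1 h2] h3; split => //; apply: IH. Qed.

Lemma valid_nth (A : nzRingType) (Alg : nat -> A -> Prop) s k :
  valid Alg s -> (k < size s)%N ->
  (1 <= (nth (0%N, 0%R) s k).1 <= 3)%N /\ Alg (nth (0%N, 0%R) s k).1 (nth (0%N, 0%R) s k).2.
Proof.
elim: s k => [|p s IH] [|k] //= [h1 h2] hk; first exact: h1.
by apply: IH.
Qed.

Lemma prodw_nth (A : nzRingType) (s : seq (nat * A)) :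
  prodw s = \prod_(k < size s) (nth (0%N, 0%R) s k).2.
Proof. by rewrite /prodw (big_nth (0%N, 0%R)) big_mkord. Qed.

Lemma peak_word (A : nzRingType) (E : A -> A) (Alg : nat -> A -> Prop) :
  monotone3 E Alg ->
  forall s1 s2 i a, valid Alg s1 -> valid Alg s2 -> (1 <= i <= 3)%N -> Alg i a ->
  (lastI s1 < i)%N -> (headI s2 < i)%N ->
  E (prodw s1 * a * prodw s2) = E (prodw s1 * E a * prodw s2).
Proof.
move=> hM s1 s2 i a v1 v2 hi ha hl hh.
set w := s1 ++ (i, a) :: s2.
have vw : valid Alg w by apply: valid_cat => //.
have hj : nth (0%N, 0%R) w (size s1) = (i, a) by rewrite nth_cat ltnn subnn.
have key := hM (size w) (fun k => (nth (0%N, 0%R) w k).2) (fun k => (nth (0%N, 0%R) w k).1) (size s1).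
rewrite /= -prodw_nth in key.
have -> : prodw s1 * a * prodw s2 = prodw w by rewrite /prodw /w big_cat big_cons /= mulrA.
have -> : prodw s1 * E a * prodw s2 = prodw (s1 ++ (i, E a) :: s2)
  by rewrite /prodw big_cat big_cons /= mulrA.
rewrite key; first last.
- move=> _; rewrite hj /= /w nth_cat.
  have -> : ((size s1).+1 < size s1)%N = false by lia.
  rewrite subSnn /=.
  by case: s2 v2 hh {w vw hj key} => [|p s2] //.
- move=> hs1; rewrite hj /= /w nth_cat.
  have -> : ((size s1).-1 < size s1)%N by lia.
  rewrite nth_last; move: hl; rewrite /lastI.
  by rewrite -(last_map fst s1 (0%N, 0%R)).
- by rewrite /w size_cat /= addnS ltnS leq_addr.
- move=> k hk; exact: valid_nth.
rewrite prodw_nth /w !size_cat /=; congr (E _); apply: eq_bigr => k _.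
rewrite !nth_cat.
case: (ltnP k (size s1)) => hk.
  by have -> : (k == size s1 :> nat) = false by apply/negbTE; lia.
case hk2: (k - size s1)%N => [|m] /=.
  by have -> : (k == size s1 :> nat) = true by apply/eqP; lia.
by have -> : (k == size s1 :> nat) = false by apply/negbTE; lia.
Qed.

Inductive Lc (A : nzRingType) (B : pred A) (Alg : nat -> A -> Prop) (k : nat) : A -> Prop :=
| Lc_gen s b : valid Alg s -> (lastI s < k)%N -> b \in B -> Lc B Alg k (prodw s * b)
| Lc_add l1 l2 : Lc B Alg k l1 -> Lc B Alg k l2 -> Lc B Alg k (l1 + l2).

Inductive Rc (A : nzRingType) (B : pred A) (Alg : nat -> A -> Prop) (k : nat) : A -> Prop :=
| Rc_gen s b : valid Alg s -> (headI s < k)%N -> b \in B -> Rc B Alg k (b * prodw s)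
| Rc_add r1 r2 : Rc B Alg k r1 -> Rc B Alg k r2 -> Rc B Alg k (r1 + r2).

Lemma peak_lin (A : nzRingType) (B : pred A) (E : A -> A) (Alg : nat -> A -> Prop) :
  cond_expectation B E -> monotone3 E Alg ->
  (forall i b a, b \in B -> Alg i a -> Alg i (b * a)) ->
  (forall i a b, b \in B -> Alg i a -> Alg i (a * b)) ->
  forall i a l r, (1 <= i <= 3)%N -> Alg i a -> Lc B Alg i l -> Rc B Alg i r ->
  E (l * a * r) = E (l * E a * r).
Proof.
move=> hE hM hAl hAr i a l r hi ha hl.
have [_ _ _ Eadd _] := ce_facts hE.
have Ebim := hE.2.2.2.2.2.2.2.
elim: hl r => [s b vs hs hb | l1 l2 _ IH1 _ IH2] r hr; last first.
  by rewrite !mulrDl !Eadd IH1 // IH2.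
elim: hr => [s2 b2 vs2 hs2 hb2 | r1 r2 _ IHa _ IHb]; last first.
  by rewrite !mulrDr !Eadd IHa IHb.
have e1 : prodw s * b * a * (b2 * prodw s2) = prodw s * (b * a * b2) * prodw s2
  by rewrite !mulrA.
rewrite e1 (peak_word hM vs vs2 hi _ hs hs2); last first.
  by apply: hAr => //; apply: hAl.
by rewrite (Ebim b a b2 hb hb2) !mulrA.
Qed.

Lemma Lc_mono (A : nzRingType) (B : pred A) (Alg : nat -> A -> Prop) k k' l :
  (k <= k')%N -> Lc B Alg k l -> Lc B Alg k' l.
Proof.
move=> hk; elim => [s b vs hs hb | l1 l2 _ IH1 _ IH2]; last exact: Lc_add.
apply: Lc_gen => //; exact: leq_trans hs hk.
Qed.

Lemma Rc_mono (A : nzRingType) (B : pred A) (Alg : nat -> A -> Prop) k k' l :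
  (k <= k')%N -> Rc B Alg k l -> Rc B Alg k' l.
Proof.
move=> hk; elim => [s b vs hs hb | l1 l2 _ IH1 _ IH2]; last exact: Rc_add.
apply: Rc_gen => //; exact: leq_trans hs hk.
Qed.

Lemma Lc_mulB (A : nzRingType) (B : pred A) (Alg : nat -> A -> Prop) k l b :
  (forall b c, b \in B -> c \in B -> b * c \in B) ->
  b \in B -> Lc B Alg k l -> Lc B Alg k (l * b).
Proof.
move=> hBM hb; elim => [s b0 vs hs hb0 | l1 l2 _ IH1 _ IH2]; last by rewrite mulrDl; exact: Lc_add.
rewrite -mulrA; apply: Lc_gen => //; exact: hBM.
Qed.

Lemma Rc_Bmul (A : nzRingType) (B : pred A) (Alg : nat -> A -> Prop) k r b :
  (forall b c, b \in B -> c \in B -> b * c \in B) ->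
  b \in B -> Rc B Alg k r -> Rc B Alg k (b * r).
Proof.
move=> hBM hb; elim => [s b0 vs hs hb0 | l1 l2 _ IH1 _ IH2]; last by rewrite mulrDr; exact: Rc_add.
rewrite mulrA; apply: Rc_gen => //; exact: hBM.
Qed.

Lemma Lc_mulA (A : nzRingType) (B : pred A) (Alg : nat -> A -> Prop) k l i a :
  (forall i b a, b \in B -> Alg i a -> Alg i (b * a)) -> 1 \in B ->
  (1 <= i <= 3)%N -> Alg i a -> Lc B Alg k l -> Lc B Alg i.+1 (l * a).
Proof.
move=> hAl h1 hi ha; elim => [s b vs hs hb | l1 l2 _ IH1 _ IH2]; last by rewrite mulrDl; exact: Lc_add.
have -> : prodw s * b * a = prodw (rcons s (i, b * a)) * 1.
  by rewrite mulr1 /prodw -cats1 big_cat big_seq1 /= mulrA.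
apply: Lc_gen => //.
  rewrite -cats1; apply: valid_cat => //=; split => //; split => //; exact: hAl.
by rewrite /lastI map_rcons last_rcons.
Qed.

Lemma Rc_Amul (A : nzRingType) (B : pred A) (Alg : nat -> A -> Prop) k r i a :
  (forall i a b, b \in B -> Alg i a -> Alg i (a * b)) -> 1 \in B ->
  (1 <= i <= 3)%N -> Alg i a -> Rc B Alg k r -> Rc B Alg i.+1 (a * r).
Proof.
move=> hAr h1 hi ha; elim => [s b vs hs hb | l1 l2 _ IH1 _ IH2]; last by rewrite mulrDr; exact: Rc_add.
have -> : a * (b * prodw s) = 1 * prodw ((i, a * b) :: s).
  by rewrite mul1r /prodw big_cons /= mulrA.
apply: Rc_gen => //=; split => //; split => //; exact: hAr.
Qed.

Lemma Lc_sum (A : nzRingType) (B : pred A) (Alg : nat -> A -> Prop) k (I : Type) (r : seq I)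
    (P : pred I) (F : I -> A) :
  0 \in B -> (0 < k)%N -> (forall i, P i -> Lc B Alg k (F i)) ->
  Lc B Alg k (\sum_(i <- r | P i) F i).
Proof.
move=> h0 hk hF; apply: big_ind => //; last exact: Lc_add.
have := @Lc_gen A B Alg k [::] 0 Logic.I hk h0; by rewrite mulr0.
Qed.

Lemma Rc_sum (A : nzRingType) (B : pred A) (Alg : nat -> A -> Prop) k (I : Type) (r : seq I)
    (P : pred I) (F : I -> A) :
  0 \in B -> (0 < k)%N -> (forall i, P i -> Rc B Alg k (F i)) ->
  Rc B Alg k (\sum_(i <- r | P i) F i).
Proof.
move=> h0 hk hF; apply: big_ind => //; last exact: Rc_add.
have := @Rc_gen A B Alg k [::] 0 Logic.I hk h0; by rewrite mul0r.
Qed.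

Lemma Lc_one (A : nzRingType) (B : pred A) (Alg : nat -> A -> Prop) k :
  1 \in B -> (0 < k)%N -> Lc B Alg k 1.
Proof. move=> h1 hk; have := @Lc_gen A B Alg k [::] 1 Logic.I hk h1; by rewrite mulr1 /prodw big_nil. Qed.

Lemma Rc_one (A : nzRingType) (B : pred A) (Alg : nat -> A -> Prop) k :
  1 \in B -> (0 < k)%N -> Rc B Alg k 1.
Proof. move=> h1 hk; have := @Rc_gen A B Alg k [::] 1 Logic.I hk h1; by rewrite mul1r /prodw big_nil. Qed.
Lemma Alg_pow (A : nzRingType) (Alg : nat -> A -> Prop) i y j :
  (forall i a c, Alg i a -> Alg i c -> Alg i (a * c)) -> Alg i y -> Alg i (y ^+ j.+1).
Proof.
move=> hAm hy; elim: j => [|j IH]; first by rewrite expr1.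
by rewrite exprS; apply: hAm.
Qed.

Lemma Rc_pow (A : nzRingType) (B : pred A) (Alg : nat -> A -> Prop) x y m t :
  (forall i a b, b \in B -> Alg i a -> Alg i (a * b)) -> 1 \in B ->
  Alg 1%N x -> Alg 3%N y -> Rc B Alg 4 t -> Rc B Alg 4 ((x + y) ^+ m * t).
Proof.
move=> hAr h1 hx hy ht; elim: m => [|m IH]; first by rewrite expr0 mul1r.
rewrite exprS -mulrA mulrDl; apply: Rc_add.
  by apply: (Rc_mono (k := 2)) => //; apply: Rc_Amul IH.
exact: Rc_Amul IH.
Qed.

Lemma expand (A : nzRingType) (x y : A) n :
  (x + y) ^+ n = y ^+ n + \sum_(j < n) y ^+ j * x * (x + y) ^+ (n.-1 - j).
Proof.
elim: n => [|n IH]; first by rewrite !expr0 big_ord0 addr0.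
rewrite exprS mulrDl {2}IH mulrDr -exprS big_ord_recl /= expr0 mul1r subn0.
rewrite mulr_sumr addrCA; congr (_ + (_ + _)).
apply: eq_bigr => j _; rewrite !mulrA -exprS /=.
by have -> : (n - j.+1 = n.-1 - j)%N by lia.
Qed.

Lemma ypeak (A : nzRingType) (B : pred A) (E : A -> A) (Alg : nat -> A -> Prop) :
  cond_expectation B E -> monotone3 E Alg ->
  (forall i b a, b \in B -> Alg i a -> Alg i (b * a)) ->
  (forall i a b, b \in B -> Alg i a -> Alg i (a * b)) ->
  (forall i a c, Alg i a -> Alg i c -> Alg i (a * c)) ->
  forall y j l r, Alg 3%N y -> Lc B Alg 3 l -> Rc B Alg 3 r ->
  E (l * y ^+ j * r) = E (l * E (y ^+ j) * r).
Proof.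
move=> hE hM hAl hAr hAm y [|j] l r hy hl hr.
  by have [_ _ -> _ _] := ce_facts hE; rewrite expr0.
apply: (peak_lin (i := 3%N) hE hM hAl hAr) => //; exact: (Alg_pow _ hAm hy).
Qed.

Definition Psum (A : nzRingType) (E : A -> A) (x y : A) (n : nat) : A :=
  \sum_(k < n.+1) \sum_(s <- Cmp k (n - k)) chain E x y s.

Lemma chain_cons (A : nzRingType) (E : A -> A) (x y : A) j t : t != [::] ->
  chain E x y (j :: t) = E (y ^+ j) * x * chain E x y t.
Proof.
by case: t => [|t0 ts] // _; rewrite /chain big_cons !mulrA.
Qed.

Lemma Prec (A : nzRingType) (E : A -> A) (x y : A) n :
  Psum E x y n = E (y ^+ n) + \sum_(j < n) E (y ^+ j) * x * Psum E x y (n.-1 - j).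
Proof.
rewrite {1}/Psum big_ord_recl subn0 big_cons big_nil addr0.
have -> : chain E x y [:: n] = E (y ^+ n) by rewrite /chain big_nil mulr1.
congr (_ + _).
set S := fun k N => \sum_(s <- Cmp k N) chain E x y s.
rewrite (eq_bigr (fun k : 'I_n => \sum_(j < (n - k)%N) E (y ^+ j) * x * S k (n.-1 - k - j)%N)); last first.
  move=> k _; rewrite lift0 CmpS big_allpairs_dep.
  have -> : (n - k.+1).+1 = (n - k)%N by have := ltn_ord k; lia.
  have -> : iota 0 (n - k) = index_iota 0 (n - k) by rewrite /index_iota subn0.
  rewrite big_mkord; apply: eq_bigr => j _.
  rewrite /S mulr_sumr; have -> : (n - k.+1 - j = n.-1 - k - j)%N by lia.
  apply: eq_big_seq => t; rewrite mem_Cmp => /andP[/eqP hs _].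
  by rewrite chain_cons // -size_eq0 hs.
rewrite [RHS](eq_bigr (fun j : 'I_n => \sum_(k < (n - j)%N) E (y ^+ j) * x * S k (n.-1 - k - j)%N))
  ; last first.
  move=> j _; rewrite /Psum mulr_sumr.
  have -> : (n.-1 - j).+1 = (n - j)%N by have := ltn_ord j; lia.
  apply: eq_bigr => k _; rewrite /S.
  by have -> : (n.-1 - j - k = n.-1 - k - j)%N by lia.
have h := (tri_exchange n (fun k j => E (y ^+ j) * x * S k (n.-1 - k - j)%N)).
exact: h.
Qed.

Lemma left_proc (A : nzRingType) (B : pred A) (E : A -> A) (Alg : nat -> A -> Prop) :
  cond_expectation B E -> monotone3 E Alg ->
  (forall i b a, b \in B -> Alg i a -> Alg i (b * a)) ->
  (forall i a b, b \in B -> Alg i a -> Alg i (a * b)) ->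
  (forall i a c, Alg i a -> Alg i c -> Alg i (a * c)) ->
  forall x y, Alg 1%N x -> Alg 3%N y ->
  forall n l t, Lc B Alg 3 l -> Rc B Alg 3 t ->
  E (l * (x + y) ^+ n * t) = E (l * Psum E x y n * t).
Proof.
move=> hE hM hAl hAr hAm x y hx hy.
have [B0 E0 E1 Eadd Esum] := ce_facts hE.
have h1 : 1 \in B := hE.1.
have hBM := hE.2.2.2.1.
have hEB := hE.2.2.2.2.2.1.
elim/ltn_ind => n IH l t hl ht.
rewrite expand Prec !mulrDr !mulrDl !Eadd.
congr (_ + _); first exact: (ypeak hE hM hAl hAr hAm).
rewrite !mulr_sumr !mulr_suml !Esum; apply: eq_bigr => j _.
have -> : l * (y ^+ j * x * (x + y) ^+ (n.-1 - j)) * t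
        = l * y ^+ j * (x * ((x + y) ^+ (n.-1 - j) * t)) by rewrite !mulrA.
rewrite (ypeak hE hM hAl hAr hAm) //; last first.
  apply: (Rc_mono (k := 2)) => //; apply: (Rc_Amul (k := 4) hAr h1) => //.
  apply: (Rc_pow _ hAr h1 hx hy); exact: (Rc_mono (k := 3)).
have -> : l * E (y ^+ j) * (x * ((x + y) ^+ (n.-1 - j) * t))
        = l * E (y ^+ j) * x * (x + y) ^+ (n.-1 - j) * t by rewrite !mulrA.
rewrite IH //; first by rewrite !mulrA.
- by have := ltn_ord j; lia.
apply: (Lc_mono (k := 2)) => //; apply: (Lc_mulA (k := 3) hAl h1) => //.
exact: Lc_mulB.
Qed.

Lemma Lc_chain (A : nzRingType) (B : pred A) (E : A -> A) (Alg : nat -> A -> Prop) :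
  cond_expectation B E ->
  (forall i b a, b \in B -> Alg i a -> Alg i (b * a)) ->
  forall x y s, Alg 1%N x -> Lc B Alg 2 (chain E x y s).
Proof.
move=> hE hAl x y s hx.
have h1 : 1 \in B := hE.1.
have hBM := hE.2.2.2.1.
have hEB := hE.2.2.2.2.2.1.
case: s => [|q0 qs] /=; first by apply: Lc_one.
have : Lc B Alg 2 (E (y ^+ q0)).
  by have := @Lc_gen A B Alg 2 [::] _ Logic.I isT (hEB (y ^+ q0)); rewrite /prodw big_nil mul1r.
elim: qs (E (y ^+ q0)) => [|q qs IH] l hl; first by rewrite big_nil mulr1.
rewrite big_cons mulrA; apply: IH.
rewrite mulrA; apply: (Lc_mulB hBM (hEB _)); exact: (Lc_mulA (i := 1) hAl h1 isT hx hl).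
Qed.

Lemma Rc_chain (A : nzRingType) (B : pred A) (E : A -> A) (Alg : nat -> A -> Prop) :
  cond_expectation B E ->
  (forall i a b, b \in B -> Alg i a -> Alg i (a * b)) ->
  forall x y s, Alg 1%N x -> Rc B Alg 2 (chain E x y s).
Proof.
move=> hE hAr x y s hx.
have h1 : 1 \in B := hE.1.
have hBM := hE.2.2.2.1.
have hEB := hE.2.2.2.2.2.1.
case: s => [|q0 qs] /=; first by apply: Rc_one.
apply: Rc_Bmul => //.
elim: qs => [|q qs IH]; first by rewrite big_nil; exact: Rc_one.
rewrite big_cons; apply: (Rc_Amul (i := 1) (k := 2) hAr h1 isT _ IH); exact: (hAr _ _ _ (hEB _) hx).
Qed.

Lemma main_abs (A : nzRingType) (B : pred A) (E : A -> A) (Alg : nat -> A -> Prop) :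
  cond_expectation B E -> monotone3 E Alg ->
  (forall i b a, b \in B -> Alg i a -> Alg i (b * a)) ->
  (forall i a b, b \in B -> Alg i a -> Alg i (a * b)) ->
  (forall i a c, Alg i a -> Alg i c -> Alg i (a * c)) ->
  forall x1 x2 y1 y2 w, Alg 1%N x1 -> Alg 1%N x2 -> Alg 3%N y1 -> Alg 3%N y2 -> Alg 2%N w ->
  forall n m,
  E ((x1 + y1) ^+ n * w * (x2 + y2) ^+ m) = E (Psum E x1 y1 n * E w * Psum E x2 y2 m).
Proof.
move=> hE hM hAl hAr hAm x1 x2 y1 y2 w hx1 hx2 hy1 hy2 hw n m.
have [B0 E0 E1 Eadd Esum] := ce_facts hE.
have h1 : 1 \in B := hE.1.
have -> : (x1 + y1) ^+ n * w * (x2 + y2) ^+ m = 1 * (x1 + y1) ^+ n * (w * (x2 + y2) ^+ m)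
  by rewrite mul1r mulrA.
rewrite (left_proc hE hM hAl hAr hAm hx1 hy1); last first.
- apply: (Rc_Amul (i := 2) (k := 4) hAr h1) => //.
  by rewrite -[_ ^+ m]mulr1; apply: (Rc_pow _ hAr h1 hx2 hy2); exact: Rc_one.
- exact: Lc_one.
have hLP : Lc B Alg 2 (Psum E x1 y1 n).
  apply: Lc_sum => // k _; apply: Lc_sum => // s _; exact: (Lc_chain hE hAl).
have -> : 1 * Psum E x1 y1 n * (w * (x2 + y2) ^+ m) = Psum E x1 y1 n * w * (x2 + y2) ^+ m * 1
  by rewrite mul1r mulr1 mulrA.
rewrite (left_proc hE hM hAl hAr hAm hx2 hy2); last first.
- exact: Rc_one.
- apply: (Lc_mulA hAl h1) => //; exact: hLP.
rewrite mulr1; apply: (peak_lin (i := 2) hE hM hAl hAr) => //.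
apply: Rc_sum => // k _; apply: Rc_sum => // s _; exact: (Rc_chain hE hAr).
Qed.

Theorem lemma3p3 (A : nzRingType) (B : pred A) (E : A -> A)
    (x1 x2 y1 y2 w : A) :
  cond_expectation B E ->
  monotone3 E (fun i => if i == 1%N then gen_alg B (pred2 x1 x2)
                        else if i == 2%N then gen_alg B (pred1 w)
                        else gen_alg B (pred2 y1 y2)) ->
  forall n m : nat,
    E (((x1 + y1) ^+ n) * w * ((x2 + y2) ^+ m)) =
    \sum_(k < n.+1) \sum_(l < m.+1)
      \sum_(q : (k.+1).-tuple 'I_(n - k).+1 | (\sum_(i <- q) val i)%N == (n - k)%N)
      \sum_(p : (l.+1).-tuple 'I_(m - l).+1 | (\sum_(i <- p) val i)%N == (m - l)%N)
        E (chain E x1 y1 (map val q) * E w * chain E x2 y2 (map val p)).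
Proof.
move=> hE hM n m.
set Alg := (fun i => _) in hM.
have [B0 E0 E1 Eadd Esum] := ce_facts hE.
have hAl : forall i b a, b \in B -> Alg i a -> Alg i (b * a).
  move=> i b a hb; rewrite /Alg; case: ifP => _; [|case: ifP => _]; exact: gen_lmul.
have hAr : forall i a b, b \in B -> Alg i a -> Alg i (a * b).
  move=> i a b hb; rewrite /Alg; case: ifP => _; [|case: ifP => _]; exact: gen_rmul.
have hAm : forall i a c, Alg i a -> Alg i c -> Alg i (a * c).
  move=> i a c; rewrite /Alg; case: ifP => _; [|case: ifP => _]; exact: gen_mul.
rewrite (main_abs hE hM hAl hAr hAm (x1 := x1) (x2 := x2) (y1 := y1) (y2 := y2) (w := w));
  last first.
- by rewrite /Alg /=; apply: gen_base; rewrite !inE eqxx.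
- by rewrite /Alg /=; apply: gen_base; rewrite !inE eqxx orbT.
- by rewrite /Alg /=; apply: gen_base; rewrite !inE eqxx.
- by rewrite /Alg /=; apply: gen_base; rewrite !inE eqxx orbT.
- by rewrite /Alg /=; apply: gen_base; rewrite !inE eqxx.
rewrite /Psum !mulr_suml Esum; apply: eq_bigr => k _.
rewrite -(tuple_Cmp k (n - k) (chain E x1 y1)) !mulr_suml Esum.
rewrite (eq_bigr (fun q : (k.+1).-tuple 'I_(n - k).+1 =>
   \sum_(l < m.+1) E (chain E x1 y1 (map val q) * E w *
       \sum_(s <- Cmp l (m - l)) chain E x2 y2 s))); last first.
  by move=> q _; rewrite mulr_sumr Esum.
rewrite exchange_big /=; apply: eq_bigr => l _; apply: eq_bigr => q _.
by rewrite -(tuple_Cmp l (m - l) (chain E x2 y2)) mulr_sumr Esum.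
Qed.
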